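(* Let $\mathcal{V}\subset\mathbb{R}$ be finite and $\mathcal{W}\subset\mathcal{V}$ with $p:=|\mathcal{W}|$, and suppose the average of the elements of $\mathcal{V}$ and the average of the elements of $\mathcal{W}$ are both zero. Consider inputs with two components $z_1,z_2\in\{[v]:v\in\mathcal{V}\}$, where component $[v]$ has associated value $v$, and target $y([v_1],[v_2])=v_1+v_2$. The training set consists of all pairs $([v_1],[v_2])$ with at least one of $v_1,v_2$ in $\mathcal{W}$. Let the inputs be represented with a compositionally structured kernel $K$ with $K=\kappa_k$ for pairs of inputs sharing exactly $k\in\{0,1,2\}$ components, with $\kappa_2>\kappa_0$, and let $f$ be the kernel model (minimum $\ell_2$-norm linear readout) that fits the training data exactly. Then for every test pair $([v_1],[v_2])$ with $v_1,v_2\in\mathcal{V}\setminus\mathcal{W}$, $$f([v_1],[v_2])=m(v_1+v_2),\qquad m:=\frac{p\,S(1;2)}{1+(p-2)S(1;2)},$$ where $S(1;2)=\frac{\kappa_1-\kappa_0}{\kappa_2-\kappa_0}$.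
   Context: A kernel is compositionally structured iff the similarity of two inputs depends only on the number of components they share. The model is $f(x)=w^T\phi(x)$ with $w$ the minimum $\ell_2$-norm readout that exactly interpolates the training targets (the limit of gradient descent from $w_0=0$); in dual form $f(x)=\sum_i a_iK(x,x_i)$ with $\sum_j a_jK(x_i,x_j)=y_i$ on the training set, where the training kernel matrix is assumed invertible. The quantity $S(1;2)$ is the representational salience of single components for two-component inputs, which for this kernel equals $(\kappa_1-\kappa_0)/(\kappa_2-\kappa_0)$. *)

(* Defs.v *)
From HB Require Import structures.
From mathcomp Require Import all_boot all_order all_algebra.
Set Implicit Arguments. Unset Strict Implicit. Unset Printing Implicit Defensive.
Import Order.TTheory GRing.Theory Num.Theory.
Local Open Scope ring_scope.

(* Components: a finite type C with an injective value map [val : C -> R];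
   the finite set V of the paper is the image of [val], and component [v]
   is the unique c : C with val c = v. *)

Definition shared (C : finType) (x x' : C * C) : nat :=
  ((x.1 == x'.1) + (x.2 == x'.2))%N.

Definition compK (R : ringType) (C : finType) (k0 k1 k2 : R) (x x' : C * C) : R :=
  match shared x x' with
  | 0%N => k0
  | 1%N => k1
  | _ => k2
  end.

Definition train_set (C : finType) (W : {set C}) : {set C * C} :=
  [set x | (x.1 \in W) || (x.2 \in W)].

Definition target (R : ringType) (C : finType) (val : C -> R) (x : C * C) : R :=
  val x.1 + val x.2.

Definition train_kmx (R : ringType) (C : finType) (W : {set C}) (K : C * C -> C * C -> R)
  : 'M[R]_#|train_set W| :=
  \matrix_(i, j) K (enum_val i) (enum_val j).

Definition train_y (R : ringType) (C : finType) (W : {set C}) (val : C -> R)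
  : 'cV[R]_#|train_set W| :=
  \col_i target val (enum_val i).

(* the kernel model in dual form: f(x) = sum_i a_i K(x, x_i),
   with a the (unique, kernel matrix invertible) solution of K_train a = y *)
Definition kernel_model (R : comUnitRingType) (C : finType) (W : {set C}) (val : C -> R)
  (K : C * C -> C * C -> R) (x : C * C) : R :=
  let a := invmx (train_kmx W K) *m train_y W val in
  \sum_(j < #|train_set W|) a j 0 * K x (enum_val j).

Definition salience (R : fieldType) (k0 k1 k2 : R) : R := (k1 - k0) / (k2 - k0).

(* Main.v *)
Require Import Defs.
From HB Require Import structures.
From mathcomp Require Import all_boot all_order all_algebra.
From mathcomp Require Import ring.
Import Order.TTheory GRing.Theory Num.Theory.
Set Implicit Arguments. Unset Strict Implicit.
Local Open Scope ring_scope.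

Section Aux.
Variables (R : realFieldType) (C : finType) (val : C -> R) (W : {set C}) (k0 k1 k2 : R).
Hypothesis sumC0 : \sum_(c : C) val c = 0.
Hypothesis sumW0 : \sum_(c in W) val c = 0.

Let e := k1 - k0.
Let g := k2 - 2 * k1 + k0.
Let n : R := #|C|%:R.
Let p : R := #|W|%:R.

Definition wv s := if s \in W then val s else 0.
Definition nv s := if s \in W then 0 else val s.
Definition AA (al de : R) (x : C * C) :=
  if x \in train_set W then al * (wv x.1 + wv x.2) + de * (nv x.1 + nv x.2) else 0.

Lemma sum_wv : \sum_v wv v = 0.
Proof. rewrite /wv -big_mkcond; exact: sumW0. Qed.

Lemma sum_nv : \sum_v nv v = 0.
Proof.
rewrite (eq_bigr (fun v => val v - wv v)); last first.
  by move=> v _; rewrite /nv /wv; case: (v \in W); rewrite ?subrr ?subr0.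
by rewrite sumrB sumC0 sum_wv subrr.
Qed.

Lemma rowsum al de s : \sum_v AA al de (s, v) = al * n * wv s + de * p * nv s.
Proof.
rewrite /AA /wv /nv; case hs: (s \in W).
  under eq_bigr => v _ do rewrite inE /= hs /= add0r.
  rewrite big_split /= -!mulr_sumr big_split /= sum_wv sum_nv sumr_const.
  rewrite -mulr_natr /n; ring.
under eq_bigr => v _ do rewrite inE /= hs /=.
rewrite -big_mkcond /= big_split /= -mulr_sumr.
rewrite [X in al * X](eq_bigr (fun i => val i)); last by move=> i ->; rewrite add0r.
rewrite [X in _ + X](eq_bigr (fun i => de * val s)); last by move=> i ->; rewrite addr0.
rewrite sumr_const sumW0 -mulr_natr /p; ring.
Qed.

Lemma colsum al de t : \sum_u AA al de (u, t) = al * n * wv t + de * p * nv t.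
Proof.
rewrite /AA /wv /nv; case hs: (t \in W).
  under eq_bigr => v _ do rewrite inE /= hs /= orbT addr0.
  rewrite big_split /= -!mulr_sumr !big_split /= sum_wv sum_nv sumr_const.
  rewrite -mulr_natr /n; ring.
under eq_bigr => v _ do rewrite inE /= hs /= orbF.
rewrite -big_mkcond /= big_split /= -mulr_sumr.
rewrite [X in al * X](eq_bigr (fun i => val i)); last by move=> i ->; rewrite addr0.
rewrite [X in _ + X](eq_bigr (fun i => de * val t)); last by move=> i ->; rewrite add0r.
rewrite sumr_const sumW0 -mulr_natr /p; ring.
Qed.

Lemma sum_pair (F : C * C -> R) : \sum_x F x = \sum_u \sum_v F (u, v).
Proof. by rewrite pair_bigA; apply: eq_bigr; case. Qed.

Lemma totsum al de : \sum_x AA al de x = 0.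
Proof.
rewrite sum_pair.
under eq_bigr => u _ do rewrite rowsum.
rewrite big_split /= -!mulr_sumr.
rewrite sum_wv sum_nv; ring.
Qed.

Lemma compK_dec (x x' : C * C) : compK k0 k1 k2 x x' =
  k0 + e * (x.1 == x'.1)%:R + e * (x.2 == x'.2)%:R
     + g * ((x.1 == x'.1)%:R * (x.2 == x'.2)%:R).
Proof.
rewrite /compK /shared /e /g; case: (x.1 == x'.1); case: (x.2 == x'.2) => /=; ring.
Qed.

Lemma delta_sum (T : finType) (s : T) (G : T -> R) :
  \sum_u (s == u)%:R * G u = G s.
Proof.
rewrite (bigD1 s) //= eqxx mul1r big1 ?addr0 // => u /negbTE.
by rewrite eq_sym => ->; rewrite mul0r.
Qed.

Lemma KA (F : C * C -> R) (x : C * C) :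
  \sum_x' compK k0 k1 k2 x x' * F x' =
  k0 * \sum_x' F x' + e * \sum_v F (x.1, v) + e * \sum_u F (u, x.2) + g * F x.
Proof.
under eq_bigr => x' _ do rewrite compK_dec mulrDl mulrDl mulrDl.
rewrite !big_split /= -!mulr_sumr.
congr (_ + _ + _ + _).
- under eq_bigr => i _ do rewrite -mulrA.
  rewrite -mulr_sumr; congr (_ * _); rewrite sum_pair /=.
  under eq_bigr => u _ do rewrite -mulr_sumr.
  by rewrite delta_sum.
- under eq_bigr => i _ do rewrite -mulrA.
  rewrite -mulr_sumr; congr (_ * _); rewrite sum_pair /= exchange_big /=.
  under eq_bigr => v _ do rewrite -mulr_sumr.
  by rewrite delta_sum.
- under eq_bigr => i _ do rewrite -!mulrA.
  rewrite -mulr_sumr; congr (_ * _); rewrite sum_pair /=.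
  under eq_bigr => u _ do rewrite -mulr_sumr delta_sum.
  by rewrite delta_sum -surjective_pairing.
Qed.

Lemma sum_enum (F : C * C -> R) :
  \sum_(j < #|train_set W|) F (enum_val j) = \sum_(x in train_set W) F x.
Proof. exact: (esym (big_enum_val _)). Qed.

Lemma sumT_AA al de (G : C * C -> R) :
  \sum_(x in train_set W) G x * AA al de x = \sum_x G x * AA al de x.
Proof.
rewrite big_mkcond; apply: eq_bigr => x _.
by case: ifP => hx //; rewrite /AA hx mulr0.
Qed.

Lemma Kmul al de :
  train_kmx W (compK k0 k1 k2) *m (\col_j AA al de (enum_val j)) =
  \col_i (al * (e * n + g) * (wv (enum_val i).1 + wv (enum_val i).2)
        + de * (e * p + g) * (nv (enum_val i).1 + nv (enum_val i).2)).
Proof.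
apply/matrixP => i j; rewrite !mxE.
under eq_bigr => k _ do rewrite !mxE.
rewrite (sum_enum (fun x => compK k0 k1 k2 (enum_val i) x * AA al de x)).
rewrite sumT_AA KA totsum rowsum colsum.
have hi := enum_valP i.
rewrite /AA hi; ring.
Qed.

End Aux.

Lemma inv_cancel_or (R : fieldType) (c z : R) : (c = 0 -> z = 0) -> c^-1 * c * z = z.
Proof.
move=> h; have [c0|nz] := eqVneq c 0; first by rewrite c0 (h c0) !mulr0.
by rewrite mulVf // mul1r.
Qed.


Lemma ytrain (R : realFieldType) (C : finType) (val : C -> R) (W : {set C}) (x : C * C) :
  val x.1 + val x.2 = (wv val W x.1 + wv val W x.2) + (nv val W x.1 + nv val W x.2).
Proof.
rewrite /wv /nv; case: (x.1 \in W); case: (x.2 \in W); rewrite ?addr0 ?add0r //.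
by rewrite addrC.
Qed.

Theorem proposition2 (R : realFieldType) (C : finType) (val : C -> R)
  (W : {set C}) (k0 k1 k2 : R) :
  injective val ->
  (\sum_(c : C) val c) / #|C|%:R = 0 ->
  (\sum_(c in W) val c) / #|W|%:R = 0 ->
  k0 < k2 ->
  train_kmx W (compK k0 k1 k2) \in unitmx ->
  forall c1 c2 : C, c1 \notin W -> c2 \notin W ->
  let p : R := #|W|%:R in
  let S := salience k0 k1 k2 in
  kernel_model W val (compK k0 k1 k2) (c1, c2)
    = (p * S / (1 + (p - 2) * S)) * (val c1 + val c2).
Proof.
move=> _ hC hW hk U c1 c2 h1 h2 p S.
have sC : \sum_(c : C) val c = 0.
  have n0 : #|C|%:R != 0 :> R.
    by rewrite pnatr_eq0 -lt0n; apply/card_gt0P; exists c1.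
  by move/eqP: hC; rewrite mulf_eq0 invr_eq0 (negbTE n0) orbF => /eqP.
have sW : \sum_(c in W) val c = 0.
  have [/eqP|hp] := eqVneq #|W| 0%N.
    by rewrite cards_eq0 => /eqP ->; rewrite big_set0.
  have n0 : #|W|%:R != 0 :> R by rewrite pnatr_eq0.
  by move/eqP: hW; rewrite mulf_eq0 invr_eq0 (negbTE n0) orbF => /eqP.
set K := train_kmx W (compK k0 k1 k2).
have null : forall al de, K *m (\col_j AA val W al de (enum_val j)) = 0 ->
    forall x, x \in train_set W -> AA val W al de x = 0.
  move=> al de hK x hx.
  have : (\col_j AA val W al de (enum_val j) : 'cV[R]_#|train_set W|) = 0.
    by have := congr1 (mulmx (invmx K)) hK; rewrite mulKmx // mulmx0.
  move/matrixP => /(_ (enum_rank_in hx x) 0); rewrite !mxE.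
  by rewrite (enum_rankK_in hx hx).
set E := (k1 - k0) * #|C|%:R + (k2 - 2 * k1 + k0).
set F := (k1 - k0) * #|W|%:R + (k2 - 2 * k1 + k0).
have nullW : E = 0 -> forall x, x \in train_set W -> wv val W x.1 + wv val W x.2 = 0.
  move=> hE x hx.
  have : AA val W 1 0 x = 0.
    apply: (null 1 0) hx; rewrite /K (Kmul _ _ _ sC sW) -/E -/F hE.
    by apply/matrixP => i j; rewrite !mxE !(mulr0, mul0r, addr0).
  by rewrite /AA hx mul0r addr0 mul1r.
have nullN : F = 0 -> forall x, x \in train_set W -> nv val W x.1 + nv val W x.2 = 0.
  move=> hF x hx.
  have : AA val W 0 1 x = 0.
    apply: (null 0 1) hx; rewrite /K (Kmul _ _ _ sC sW) -/E -/F hF.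
    by apply/matrixP => i j; rewrite !mxE !(mulr0, mul0r, addr0).
  by rewrite /AA hx mul0r add0r mul1r.
have hy : train_y W val = K *m (\col_j AA val W E^-1 F^-1 (enum_val j)).
  rewrite /K (Kmul _ _ _ sC sW) -/E -/F.
  apply/matrixP => i j; rewrite !mxE /target (ytrain val W).
  have hi := enum_valP i.
  rewrite !inv_cancel_or //.
  - by move=> /nullN; apply.
  - by move=> /nullW; apply.
rewrite /kernel_model -/K hy (mulKmx U).
under eq_bigr => j _ do rewrite mxE mulrC.
rewrite (sum_enum W (fun x => compK k0 k1 k2 (c1, c2) x * AA val W E^-1 F^-1 x)).
rewrite sumT_AA KA.
rewrite (totsum sC sW).
rewrite (rowsum sC sW) (colsum sC sW).
have hT : (c1, c2) \notin train_set W by rewrite inE /= negb_or h1 h2.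
rewrite /AA (negbTE hT) /wv /nv /= (negbTE h1) (negbTE h2).
rewrite /S /salience.
have d0 : k2 - k0 != 0 by rewrite subr_eq0 gt_eqF.
have -> : 1 + (p - 2) * ((k1 - k0) / (k2 - k0)) = F / (k2 - k0).
  by rewrite /F /p; field.
rewrite invf_div.
move: E^-1 F^-1 => al de.
rewrite -/p; by field.
Qed.
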